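(* Let $1 \leq k \leq n$ and $x \in [0,1]^n$. Then for every subset $W \subseteq \{1, \ldots, n\}$ with $|W| \geq k$, $$Q_k(x) \geq \frac{1}{|W| - k + 1}\left(\sum_{i \in W} x_i - k + 1\right).$$
   Context: For $x \in \mathbb{R}^n$ and an integer $1 \leq k \leq n$, $Q_k(x)$ denotes the $k$-th largest entry of $x$ (entries counted with multiplicity). *)

(* Defs.v *)
From mathcomp Require Import all_boot all_order all_algebra.
Set Implicit Arguments. Unset Strict Implicit. Unset Printing Implicit Defensive.
Import Order.TTheory GRing.Theory Num.Theory.
Local Open Scope ring_scope.

Definition Qk (R : realDomainType) (n : nat) (k : nat) (x : 'I_n -> R) : R :=
  nth 0 (sort (fun a b : R => b <= a) [seq x i | i <- enum 'I_n]) k.-1.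

(* Main.v *)
Require Import Defs.
From mathcomp Require Import all_boot all_order all_algebra.
From mathcomp Require Import lra.
Import Order.TTheory GRing.Theory Num.Theory.
Local Open Scope ring_scope.

Lemma cnt_sorted (R : realFieldType) (s : seq R) (m : nat) :
  sorted (fun a b : R => b <= a) s -> (m < size s)%N ->
  (count (fun y : R => (nth 0 s m < y)%R) s <= m)%N.
Proof.
move=> so ms.
have tr : transitive (fun a b : R => b <= a).
  by move=> y a z h1 h2; exact: le_trans h2 h1.
rewrite -(cat_take_drop m s) count_cat.
have -> : count (fun y : R => nth 0 (take m s ++ drop m s) m < y) (drop m s) = 0%N.
  apply/eqP; rewrite -leqn0 leqNgt -has_count. apply/hasPn => y /(nthP 0) [j hj <-].
  rewrite cat_take_drop nth_drop ltNge negbK.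
  have h := (sorted_leq_nth tr (fun a : R => lexx a) 0 so). 
  apply: h. all: try exact ms. 2: by rewrite leq_addr.
  rewrite size_drop ltn_subRL in hj. exact hj.
rewrite addn0; apply: leq_trans (count_size _ _) _.
by rewrite size_take ms.
Qed.

Lemma sumcnt (R : realFieldType) (T : Type) (s : seq T) (P : pred T) :
  \sum_(i <- s) (P i)%:R = (count P s)%:R :> R.
Proof.
elim: s => [|a s IH]; first by rewrite big_nil.
by rewrite big_cons IH /= natrD.
Qed.

Theorem theorem3 (R : realFieldType) (n k : nat) (x : 'I_n -> R)
  (hk1 : (1 <= k)%N) (hkn : (k <= n)%N)
  (hx : forall i, 0 <= x i <= 1)
  (W : {set 'I_n}) (hW : (k <= #|W|)%N) :
  Qk k x >= ((#|W| - k + 1)%:R)^-1 * (\sum_(i in W) x i - k%:R + 1).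
Proof.
set q := Qk k x.
set s := sort (fun a b : R => b <= a) [seq x i | i <- enum 'I_n].
have hq : q = nth 0 s k.-1 by [].
have hs : size s = n by rewrite size_sort size_map size_enum_ord.
have hkk : (k.-1 < size s)%N by rewrite hs prednK.
have tot : total (fun a b : R => b <= a) by move=> a b; exact: le_total.
have so : sorted (fun a b : R => b <= a) s by exact: sort_sorted.
have hc := @cnt_sorted R s k.-1 so hkk.
rewrite -hq in hc.
have pe : perm_eq s [seq x i | i <- enum 'I_n] by rewrite perm_sort.
rewrite ((permP pe) _) count_map in hc.
have q1 : q <= 1.
  have : q \in s by rewrite hq mem_nth.
  rewrite mem_sort => /mapP [i _ ->]; by case/andP: (hx i).
set c := \sum_(i in W) ((q < x i)%R : nat)%:R : R.
have hS : \sum_(i in W) x i <= #|W|%:R * q + c * (1 - q).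
  apply: le_trans (_ : \sum_(i in W) (q + ((q < x i)%R : nat)%:R * (1 - q)) <= _).
    apply: ler_sum => i _; case: ltP => h /=.
      by rewrite mul1r addrC subrK; case/andP: (hx i).
    by rewrite mul0r addr0.
  by rewrite big_split /= sumr_const mulr_natl -mulr_suml.
have hc2 : c <= (k.-1)%:R.
  apply: le_trans (_ : c <= \sum_(i < n) ((q < x i)%R : nat)%:R) _.
    rewrite /c big_mkcond /=; apply: ler_sum => i _.
    by case: (i \in W) => //; case: (q < x i).
  by rewrite -big_enum /= sumcnt ler_nat.
have hk : (k.-1)%:R = k%:R - 1 :> R by rewrite -{2}(prednK hk1) -natr1 addrK.
rewrite hk in hc2.
have hprod : c * (1 - q) <= (k%:R - 1) * (1 - q).
  by apply: ler_wpM2r => //; rewrite subr_ge0.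
have wpos : 0 < (#|W| - k + 1)%:R :> R by rewrite ltr0n addn1.
rewrite ler_pdivrMl // natrD natrB //.
nra.
Qed.
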